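(* Let $\mathfrak R,\mathfrak R'$ be iterated graph systems satisfying (GR1)–(GR3), with replacement graphs $G_m$ and $G_m'$, and let $\varphi:\mathfrak R\to\mathfrak R'$ be a mapping between iterated graph systems. Then for every $m\in\mathbb N$ the map $\varphi_m:W_m\to W_m'$, $\varphi_m(w_1\cdots w_m):=\varphi(w_1)\cdots\varphi(w_m)$, is a mapping between the graphs $G_m\to G_m'$. If $\varphi$ is an isomorphism of iterated graph systems, then $\varphi_m:G_m\to G'_m$ is a graph isomorphism. Moreover, for every edge $\{w,v\}\in E(G_m)$, either $\varphi_m(w)=\varphi_m(v)$ or $|\varphi_m(w)\wedge\varphi_m(v)|=|w\wedge v|$.
   Context: A graph is a pair $(V,E)$ with $V$ finite non-empty and $E\subseteq V\times V$ such that $(x,y)\in E$ implies $(y,x)\notin E$; write $\{x,y\}\in E$ if $(x,y)\in E$ or $(y,x)\in E$. A mapping between graphs $\varphi:G\to G'$ is a function $V(G)\to V(G')$ such that for every $\{x,y\}\in E(G)$ either $\varphi(x)=\varphi(y)$ or $\{\varphi(x),\varphi(y)\}\in E(G')$; it is a graph isomorphism if it is bijective and $\varphi^{-1}$ is also a mapping between graphs. An iterated graph system (IGS) $\mathfrak R$ consists of a connected graph $G_1=(S,E)$, a finite set of types $\mathcal T$, a surjective typing $\mathfrak t:E\to\mathcal T$, and non-empty gluing rules $I_t\subseteq S\times S$ for $t\in\mathcal T$. With $W_m=S^m$, $[w]_k=w_1\cdots w_k$ and $|w\wedge v|=\min\{k:[w]_k\neq[v]_k\}$ for distinct equal-length words,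 the replacement graphs $G_m=(W_m,E_m)$ and their typings are defined recursively: $(w,v)\in E_{m+1}$ iff either (1) $[w]_m=[v]_m$ and $(w_{m+1},v_{m+1})\in E$ (type $\mathfrak t(w_{m+1},v_{m+1})$) or (2) $([w]_m,[v]_m)\in E_m$ and $(w_{m+1},v_{m+1})\in I_{\mathfrak t([w]_m,[v]_m)}$ (type $\mathfrak t([w]_m,[v]_m)$). (GR1)–(GR3): with $I_{t,+}$, $I_{t,-}$ the sets of first resp. second coordinates of $I_t$, $\mathfrak b^+_t(w)=|\{v:(w,v)\in I_t\}|$, $\mathfrak b^-_t(w)=|\{v:(v,w)\in I_t\}|$, and $\deg^+_t(w)$, $\deg^-_t(w)$ the numbers of outgoing, resp. incoming, edges of $G_1$ at $w$ of type $t$: (GR1) $\mathfrak b^\star_t(w)\in\{0,1\}$; (GR2) $\mathfrak b^\star_t(w)$ and $\deg^\star_t(w)$ are never both non-zero; (GR3) $I_{t,-}\cap I_{t,+}=\emptyset$. Given IGS $\mathfrak R=(G_1=(S,E),\mathcal T,\mathfrak t,(I_t))$ and $\mathfrak R'=(G_1'=(S',E'),\mathcal T',\mathfrak t',(I'_{t'}))$, a mapping of IGS $\varphi:\mathfrak R\to\mathfrak R'$ is a mapping between graphs $\varphi:G_1\to G_1'$ such that: (1) if $\varphi(w_1)=\varphi(v_1)$ for some edge $\{w_1,v_1\}\in E$ of type $t$, then $\varphi(w_2)=\varphi(v_2)$ for all $(w_2,v_2)\in I_t$; (2) if $(w_1,v_1)\in E$ has type $t$ and $(\varphi(w_1),\varphi(v_1))\in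 E'$ has type $t'$, then $(\varphi(w_2),\varphi(v_2))\in I'_{t'}$ for all $(w_2,v_2)\in I_t$; (3) if $(w_1,v_1)\in E$ has type $t$ and $(\varphi(v_1),\varphi(w_1))\in E'$ has type $t'$, then $(\varphi(v_2),\varphi(w_2))\in I'_{t'}$ for all $(w_2,v_2)\in I_t$. It is an isomorphism of IGS if it is a graph isomorphism $G_1\to G_1'$ and $\varphi^{-1}$ is also a mapping of IGS. *)

(* Defs.v *)
From mathcomp Require Import all_boot.
Set Implicit Arguments. Unset Strict Implicit. Unset Printing Implicit Defensive.

Definition is_graph (V : finType) (e : rel V) : Prop :=
  0 < #|V| /\ forall x y, e x y -> ~~ e y x.

Definition uedge (V : finType) (e : rel V) : rel V := fun x y => e x y || e y x.

Definition graph_mapping (V V' : finType) (e : rel V) (e' : rel V') (f : V -> V') : Prop :=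
  forall x y, uedge e x y -> f x = f y \/ uedge e' (f x) (f y).

Definition graph_iso (V V' : finType) (e : rel V) (e' : rel V') (f : V -> V') : Prop :=
  graph_mapping e e' f /\
  exists g : V' -> V, [/\ cancel f g, cancel g f & graph_mapping e' e g].

Record igs := IGS {
  vert : finType;
  edge : rel vert;
  ty : finType;
  typ : vert -> vert -> ty;           (* typing t, relevant on E only *)
  glue : ty -> rel vert
}.
Arguments edge i : clear implicits.
Arguments typ i : clear implicits.
Arguments glue i : clear implicits.

Definition is_IGS (R : igs) : Prop :=
  [/\ is_graph (edge R),
      (forall x y, connect (uedge (edge R)) x y),
      (forall t : ty R, exists x y, edge R x y /\ typ R x y = t)
    & (forall t : ty R, exists x y, glue R t x y)].

Definition bplus (R : igs) (t : ty R) (w : vert R) := #|[pred v | glue R t w v]|.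
Definition bminus (R : igs) (t : ty R) (w : vert R) := #|[pred v | glue R t v w]|.
Definition degplus (R : igs) (t : ty R) (w : vert R) :=
  #|[pred v | edge R w v && (typ R w v == t)]|.
Definition degminus (R : igs) (t : ty R) (w : vert R) :=
  #|[pred v | edge R v w && (typ R v w == t)]|.

Definition GR1 (R : igs) : Prop :=
  forall (t : ty R) (w : vert R), bplus t w <= 1 /\ bminus t w <= 1.
Definition GR2 (R : igs) : Prop :=
  forall (t : ty R) (w : vert R), ~ (bplus t w != 0 /\ degplus t w != 0) /\
              ~ (bminus t w != 0 /\ degminus t w != 0).
Definition GR3 (R : igs) : Prop :=
  forall (t : ty R) (w : vert R), ~ ((exists v, glue R t w v) /\ (exists u, glue R t u w)).

(* Replacement graphs.  [rtype R rw rv] computes, on REVERSED words, the type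
   of the oriented edge (w,v) of G_m (Some t), or None if (w,v) is not an edge,
   following the recursive definition: for w = w' a, v = v' b,
   (1) w' = v' and (a,b) \in E, type t(a,b); or
   (2) (w',v') \in E_m of type t and (a,b) \in I_t, type t. *)
Fixpoint rtype (R : igs) (rw rv : seq (vert R)) : option (ty R) :=
  match rw, rv with
  | a :: rw', b :: rv' =>
      if rw' == rv' then (if edge R a b then Some (typ R a b) else None)
      else match rtype rw' rv' with
           | Some t => if glue R t a b then Some t else None
           | None => None
           end
  | _, _ => None
  end.

Definition Gedge (R : igs) (m : nat) : rel (m.-tuple (vert R)) :=
  fun w v => rtype (rev w) (rev v) != None.

Definition wedge (A : eqType) (w v : seq A) : nat :=
  find (fun k => take k w != take k v) (iota 0 (size w).+1).

Definition igs_mapping (R R' : igs) (phi : vert R -> vert R') : Prop :=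
  [/\ graph_mapping (edge R) (edge R') phi,
      (forall w1 v1, edge R w1 v1 -> phi w1 = phi v1 ->
         forall w2 v2, glue R (typ R w1 v1) w2 v2 -> phi w2 = phi v2),
      (forall w1 v1, edge R w1 v1 -> edge R' (phi w1) (phi v1) ->
         forall w2 v2, glue R (typ R w1 v1) w2 v2 ->
           glue R' (typ R' (phi w1) (phi v1)) (phi w2) (phi v2))
    & (forall w1 v1, edge R w1 v1 -> edge R' (phi v1) (phi w1) ->
         forall w2 v2, glue R (typ R w1 v1) w2 v2 ->
           glue R' (typ R' (phi v1) (phi w1)) (phi v2) (phi w2))].

Definition igs_iso (R R' : igs) (phi : vert R -> vert R') : Prop :=
  graph_iso (edge R) (edge R') phi /\
  exists psi : vert R' -> vert R,
    [/\ cancel phi psi, cancel psi phi & igs_mapping psi].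

Arguments Gedge R m : clear implicits.
Definition phim (R R' : igs) (phi : vert R -> vert R') (m : nat)
  (w : m.-tuple (vert R)) : m.-tuple (vert R') := map_tuple phi w.

(* Main.v *)
Require Import Defs.
From mathcomp Require Import all_boot.

Lemma all2_size (S T : Type) (r : S -> T -> bool) s t : all2 r s t -> size s = size t.
Proof. by rewrite all2E => /andP [/eqP]. Qed.

Lemma rtype_split (R : igs) rw rv t : rtype rw rv = Some t ->
  exists s s' a b c, [/\ rw = s ++ a :: c, rv = s' ++ b :: c, edge R a b,
     typ R a b = t & all2 (glue R t) s s'].
Proof.
elim: rw rv t => [|a rw IH] [|b rv] t //=.
case: eqP => [<-|ne].
  case: ifP => // eab [<-]; by exists [::], [::], a, b, rw.
case E: rtype => [t0|] //; case: ifP => // g [<-].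
have [s [s' [a' [b' [c [-> -> eab ht al]]]]]] := IH _ _ E.
by exists (a :: s), (b :: s'), a', b', c; split => //=; rewrite g.
Qed.

Lemma rtype_build (R : igs) t a b c s s' : edge R a b -> a != b -> t = typ R a b ->
  all2 (glue R t) s s' -> rtype (s ++ a :: c) (s' ++ b :: c) = Some t.
Proof.
move=> eab nab Ht; elim: s s' => [|x s IH] [|y s'] //=.
  by rewrite eqxx eab Ht.
move=> /andP [gxy al]; rewrite (eqseq_cat _ _ (@all2_size _ _ _ _ _ al)).
have -> : (a :: c == b :: c) = false by rewrite eqseq_cons (negbTE nab).
by rewrite andbF IH // gxy.
Qed.

Lemma take_split (T : eqType) (p x y : seq T) a b k : a != b ->
  (take k (p ++ a :: x) == take k (p ++ b :: y)) = (k <= size p).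
Proof.
move=> nab; rewrite !take_cat; case: ltnP => h; first by rewrite eqxx (ltnW h).
rewrite eqseq_cat // eqxx /=.
case E: (k - size p) => [|n] /=.
  by apply/esym; rewrite -subn_eq0 E.
rewrite eqseq_cons (negbTE nab) /=; apply/esym/negbTE; rewrite -ltnNge -subn_gt0 E.
done.
Qed.

Lemma all2_mapf (A B : Type) (r : A -> A -> bool) (r' : B -> B -> bool) (f : A -> B) s s' :
  (forall x y, r x y -> r' (f x) (f y)) -> all2 r s s' -> all2 r' (map f s) (map f s').
Proof. by move=> H; elim: s s' => [|x s IH] [|y s'] //= /andP [/H -> /IH]. Qed.

Lemma all2_mapf_sw (A B : Type) (r : A -> A -> bool) (r' : B -> B -> bool) (f : A -> B) s s' :
  (forall x y, r x y -> r' (f y) (f x)) -> all2 r s s' -> all2 r' (map f s') (map f s).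
Proof. by move=> H; elim: s s' => [|x s IH] [|y s'] //= /andP [/H -> /IH]. Qed.

Lemma all2_map_eq (A B : Type) (r : A -> A -> bool) (f : A -> B) s s' :
  (forall x y, r x y -> f x = f y) -> all2 r s s' -> map f s = map f s'.
Proof. by move=> H; elim: s s' => [|x s IH] [|y s'] //= /andP [/H -> /IH ->]. Qed.

Arguments all2_mapf {A B r r' f s s'}.
Arguments all2_mapf_sw {A B r r' f s s'}.
Arguments all2_map_eq {A B r f s s'}.

Lemma rev_split (T : Type) (s c : seq T) a : rev (s ++ a :: c) = rev c ++ a :: rev s.
Proof. by rewrite rev_cat rev_cons cat_rcons. Qed.

Lemma main_seq (R R' : igs) (phi : vert R -> vert R') :
  (forall x, ~~ edge R' x x) -> igs_mapping phi -> forall rw rv, rtype rw rv != None ->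
  map phi rw = map phi rv \/
  ((rtype (map phi rw) (map phi rv) != None \/ rtype (map phi rv) (map phi rw) != None) /\
   forall k, (take k (rev (map phi rw)) == take k (rev (map phi rv))) =
             (take k (rev rw) == take k (rev rv))).
Proof.
move=> irr [gm h1 h2 h3] rw rv; case E: rtype => [t|] // _.
have [s [s' [a [b [c [-> -> eab ht al]]]]]] := @rtype_split _ _ _ _ E.
have sz := @all2_size _ _ _ _ _ al.
have key : phi a != phi b -> forall k,
   (take k (rev (map phi (s ++ a :: c))) == take k (rev (map phi (s' ++ b :: c)))) =
   (take k (rev (s ++ a :: c)) == take k (rev (s' ++ b :: c))).
  move=> nab k; rewrite !map_cat /= !rev_split !take_split ?size_rev ?size_map //.
  by apply: contraNneq nab => ->.
have ue : uedge (edge R) a b by rewrite /uedge eab.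
case: (gm a b ue) => [eq|/orP [e|e]].
- left; rewrite !map_cat /=; rewrite eq; congr (_ ++ _ :: _).
  apply: (all2_map_eq (r := glue R t)) al => x y g.
  by apply: (h1 a b eab eq); rewrite ht.
- have nab : phi a != phi b by apply/eqP => q; move: e; rewrite q (negbTE (irr _)).
  right; split; last exact: key.
  left; rewrite !map_cat /= (@rtype_build R' (typ R' (phi a) (phi b))) //.
  apply: all2_mapf al => x y g; apply: h2 => //; by rewrite ht.
- have nab : phi b != phi a by apply/eqP => q; move: e; rewrite q (negbTE (irr _)).
  right; split; last by apply: key; rewrite eq_sym.
  right; rewrite !map_cat /= (@rtype_build R' (typ R' (phi b) (phi a))) //.
  apply: all2_mapf_sw al => x y g; apply: h3 => //; by rewrite ht.
Qed.

Lemma irr_of (R : igs) : is_IGS R -> forall x, ~~ edge R x x.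
Proof. by case=> [[_ H] _ _ _] x; apply/negP => e; move: (H x x e); rewrite e. Qed.

Lemma revmap (A B : Type) (f : A -> B) s : rev (map f (rev s)) = map f s.
Proof. by rewrite map_rev revK. Qed.

Lemma gm_dir (R R' : igs) (phi : vert R -> vert R') m :
  (forall x, ~~ edge R' x x) -> igs_mapping phi -> forall w v : m.-tuple (vert R),
  Gedge R m w v -> phim phi w = phim phi v \/
  (uedge (Gedge R' m) (phim phi w) (phim phi v) /\
   wedge (phim phi w) (phim phi v) = wedge w v).
Proof.
move=> irr hm w v e.
case: (@main_seq _ _ _ irr hm _ _ e) => [eq|[ed key]].
  left; apply: val_inj => /=; by rewrite -(revmap _ _ phi w) -(revmap _ _ phi v) eq.
right; split.
  by rewrite /uedge /Gedge /= -!map_rev; case/orP: (introT orP ed) => ->; rewrite ?orbT.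
rewrite /wedge !size_tuple; apply: eq_find => k /=.
by move: (key k); rewrite !revmap !revK => ->.
Qed.

Arguments gm_dir {R R' phi m}.

Lemma wedge_sym_t (A : eqType) m (w v : m.-tuple A) : wedge w v = wedge v w.
Proof. by rewrite /wedge !size_tuple; apply: eq_find => k; rewrite eq_sym. Qed.

Lemma gm_full (R R' : igs) (phi : vert R -> vert R') m :
  (forall x, ~~ edge R' x x) -> igs_mapping phi -> forall w v : m.-tuple (vert R),
  uedge (Gedge R m) w v -> phim phi w = phim phi v \/
  (uedge (Gedge R' m) (phim phi w) (phim phi v) /\
   wedge (phim phi w) (phim phi v) = wedge w v).
Proof.
move=> irr hm w v /orP [e|e]; first exact: gm_dir.
case: (gm_dir irr hm _ _ e) => [eq|[u wd]]; first by left.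
right; split; first by rewrite /uedge orbC.
by rewrite wedge_sym_t wd wedge_sym_t.
Qed.

Arguments gm_full {R R' phi m}.

Lemma phimK (R R' : igs) (phi : vert R -> vert R') psi m :
  cancel phi psi -> cancel (phim phi (m:=m)) (phim psi (m:=m)).
Proof. by move=> c w; apply: val_inj => /=; rewrite -map_comp (eq_map c) map_id. Qed.

Arguments phimK {R R' phi psi m}.
Arguments irr_of {R}.

Theorem proposition3p12 (R R' : igs) (phi : vert R -> vert R') :
  is_IGS R -> is_IGS R' ->
  GR1 R -> GR2 R -> GR3 R -> GR1 R' -> GR2 R' -> GR3 R' ->
  igs_mapping phi ->
  (forall m, 0 < m -> graph_mapping (Gedge R m) (Gedge R' m) (phim phi (m:=m))) /\
  (igs_iso phi -> forall m, 0 < m ->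
     graph_iso (Gedge R m) (Gedge R' m) (phim phi (m:=m))) /\
  (forall m, 0 < m -> forall w v : m.-tuple (vert R),
     uedge (Gedge R m) w v ->
     phim phi w = phim phi v \/ wedge (phim phi w) (phim phi v) = wedge w v).
Proof.
move=> iR iR' _ _ _ _ _ _ hm.
have irR := irr_of iR; have irR' := irr_of iR'.
have P1 : forall m, graph_mapping (Gedge R m) (Gedge R' m) (phim phi (m:=m)).
  move=> m w v u; case: (gm_full irR' hm _ _ u) => [->|[u' _]]; by [left | right].
split; first by move=> m _; apply: P1.
split.
  move=> [_ [psi [c1 c2 hpsi]]] m _; split; first exact: P1.
  exists (phim psi (m:=m)); split; [exact: phimK | exact: phimK |].
  move=> w v u; case: (gm_full irR hpsi _ _ u) => [->|[u' _]]; by [left | right].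
move=> m _ w v u; case: (gm_full irR' hm _ _ u) => [->|[_ ->]]; by [left | right].
Qed.
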